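(* Let $u$ be a user, let $I$ be a finite set of items, and let $s_{uq}(\theta)\in\mathbb{R}$ be the model score of item $q\in I$ for $u$ under parameters $\theta$. Rank all items by decreasing score (ties broken arbitrarily), let $r_q$ denote the position of item $q$ in this ranking, and let $R_k(u)$ be the set of the first $k$ items. Let $P(u)\subseteq I$ be a nonempty set of test positive items for $u$. Define $$\phi_u(p;\theta)=\frac{1}{1+\sum_{q\neq p}\exp\!\left(s_{uq}(\theta)-s_{up}(\theta)\right)},$$ $$\mathrm{DCG@k}(u)=\sum_{p\in P(u)\cap R_k(u)}\frac{1}{\log_2(r_p+1)},\qquad Z_k(u)=\mathrm{IDCG@k}(u)=\sum_{i=1}^{\min(k,|P(u)|)}\frac{1}{\log_2(i+1)},$$ and $\mathrm{NDCG@k}(u)=\mathrm{DCG@k}(u)/\mathrm{IDCG@k}(u)$. Then $$\mathrm{NDCG@k}(u)\ \ge\ \frac{1}{Z_k(u)}\sum_{p\in P(u)}\mathbb{I}(r_p\le k)\,\phi_u(p;\theta),$$ where $\mathbb{I}(\cdot)$ is the indicator function.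
   Context: Here $k\ge 1$ is an integer and the sum in $\phi_u$ ranges over all items $q\in I$ other than $p$. *)

(* Defs.v *)
From HB Require Import structures.
From mathcomp Require Import all_boot all_order all_algebra.
From mathcomp Require Import all_classical all_reals.
From mathcomp Require Import all_analysis.
Set Implicit Arguments. Unset Strict Implicit. Unset Printing Implicit Defensive.
Import Order.TTheory GRing.Theory Num.Theory.
Local Open Scope ring_scope.

(* Setting: I a finite set of items, s : I -> R the scores s_{uq}(theta) for the
   fixed user u and fixed parameters theta. *)

Definition log2 {R : realType} (x : R) : R := ln x / ln 2.

(* A ranking of the items: a bijection from items to positions 1..|I|
   (stored 0-based as 'I_#|I|), ordering items by decreasing score,
   ties broken arbitrarily. *)
Definition is_ranking {R : realType} {I : finType} (s : I -> R)
  (pos : I -> 'I_#|I|) : Prop :=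
  bijective pos /\ forall p q : I, s q < s p -> (pos p < pos q)%N.

Definition rnk {I : finType} (pos : I -> 'I_#|I|) (q : I) : nat := (pos q).+1.

Definition topk {I : finType} (pos : I -> 'I_#|I|) (k : nat) : {set I} :=
  [set q | (rnk pos q <= k)%N].

Definition phi {R : realType} {I : finType} (s : I -> R) (p : I) : R :=
  1 / (1 + \sum_(q : I | q != p) expR (s q - s p)).

Definition DCG {R : realType} {I : finType} (pos : I -> 'I_#|I|) (P : {set I})
  (k : nat) : R :=
  \sum_(p in P :&: topk pos k) 1 / log2 ((rnk pos p)%:R + 1).

Definition IDCG {R : realType} {I : finType} (P : {set I}) (k : nat) : R :=
  \sum_(1 <= i < (minn k #|P|).+1) 1 / log2 (i%:R + 1).

Definition NDCG {R : realType} {I : finType} (pos : I -> 'I_#|I|) (P : {set I})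
  (k : nat) : R := DCG pos P k / IDCG (R := R) P k.

(* Main.v *)
Require Import Defs.
From HB Require Import structures.
From mathcomp Require Import all_boot all_order all_algebra.
From mathcomp Require Import all_classical all_reals.
From mathcomp Require Import all_analysis.
Import Order.TTheory GRing.Theory Num.Theory.
Local Open Scope ring_scope.

Lemma card_before (I : finType) (pos : I -> 'I_#|I|) (p : I) :
  bijective pos -> #|[set q | (pos q < pos p)%N]| = pos p.
Proof.
move=> bp; have ip := bij_inj bp.
rewrite -(card_imset _ ip).
have -> : pos @: [set q | (pos q < pos p)%N] = [set j : 'I_#|I| | (j < pos p)%N].
  apply/setP => j; rewrite inE; apply/imsetP/idP.
    by case=> q; rewrite inE => h ->.
  case: bp => g pg gp h; exists (g j); last by rewrite gp.
  by rewrite inE gp.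
rewrite -sum1_card.
have hm : (pos p <= #|I|)%N by apply: ltnW.
rewrite (eq_bigl (fun j : 'I_#|I| => true && (j < pos p)%N)); last by move=> j; rewrite inE.
by rewrite -(big_ord_widen_cond _ (fun _ => true) (fun _ => 1%N) hm) sum1_card card_ord.
Qed.

Lemma log_bound (R : realType) (r : nat) : (1 <= r)%N ->
  0 < log2 (r%:R + 1 : R) /\ log2 (r%:R + 1 : R) <= r%:R.
Proof.
move=> hr.
have l2 : 0 < ln (2 : R) by apply: ln_gt0; rewrite ltr1n.
have h1 : (1 : R) < r%:R + 1 by rewrite natr1 ltr1n ltnS.
split; first by rewrite /log2 divr_gt0 // ln_gt0.
rewrite /log2 ler_pdivrMr // mulr_natl -lnXn ?ltr0n //.
have h2 : (r%:R + 1 : R) <= 2 ^+ r.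
  by rewrite natr1 -natrX ler_nat ltn_expl.
rewrite ler_ln // posrE.
  by apply: lt_trans h1.
by rewrite exprn_gt0 // ltr0n.
Qed.

Lemma phi_bound (R : realType) (I : finType) (s : I -> R)
  (pos : I -> 'I_#|I|) (p : I) :
  is_ranking s pos -> phi s p <= 1 / (rnk pos p)%:R.
Proof.
case=> bp hs.
set A := [set q | (pos q < pos p)%N].
have hX : (#|A|%:R : R) <= \sum_(q : I | q != p) expR (s q - s p).
  apply: (@le_trans _ _ (\sum_(q : I | q != p) (if q \in A then 1 else 0))).
    rewrite -big_mkcondr /=.
    rewrite (eq_bigl (fun q => q \in A)); first by rewrite sumr_const.
    move=> q; rewrite /A inE; case: eqP => [->|]; first by rewrite ltnn.
    by [].
  apply: ler_sum => q _; case: ifP => qA; last exact: expR_ge0.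
  rewrite -[1 : R]addr0; apply: le_trans (expR_ge1Dx _).
  rewrite lerD2l subr_ge0; rewrite leNgt; apply/negP => /hs.
  by move: qA; rewrite /A inE => h1 h2; move: (ltn_trans h1 h2); rewrite ltnn.
rewrite /phi /rnk card_before // in hX *.
rewrite !div1r lef_pV2 ?posrE ?ltr0n //.
  by rewrite -natr1 addrC lerD2l.
apply: ltr_wpDr; [apply: sumr_ge0 => q _; exact: expR_ge0 | exact: ltr01].
Qed.

Theorem corollary2 (R : realType) (I : finType) (s : I -> R)
  (pos : I -> 'I_#|I|) (P : {set I}) (k : nat) :
  (1 <= k)%N ->
  is_ranking s pos ->
  (0 < #|P|)%N ->
  NDCG pos P k >=
    (IDCG (R := R) P k)^-1 *
      \sum_(p in P) (if (rnk pos p <= k)%N then 1 else 0) * phi s p.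
Proof.
move=> hk hr hP.
have hI : 0 < IDCG (R := R) P k.
  rewrite /IDCG big_ltn; last by rewrite ltnS leq_min hk hP.
  apply: ltr_wpDr.
    rewrite big_nat_cond; apply: sumr_ge0 => i /andP [/andP [hi _] _].
    have [h1 _] := @log_bound R i (ltnW hi).
    by rewrite div1r invr_ge0 ltW.
  by rewrite /log2 divff ?div1r ?invr1 ?ltr01 // -[1 + 1]/(2%:R : R) gt_eqF // ln_gt0 // ltr1n.
rewrite /NDCG mulrC ler_pM2r ?invr_gt0 //.
rewrite /DCG (big_mkcond (fun p => p \in P :&: topk pos k)) /=.
rewrite big_mkcond /=.
apply: ler_sum => p _.
rewrite /topk !inE.
case: (p \in P) => //=; case: ifP => hk'; last by rewrite mul0r.
rewrite mul1r; apply: le_trans (@phi_bound _ _ s pos p hr) _.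
have [h1 h2] := @log_bound R _ (ltn0Sn (pos p)).
by rewrite !div1r lef_pV2 ?posrE ?ltr0n.
Qed.
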